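(* Fix $\varepsilon>0$. Let $G^p_n$ be drawn from $G(n,n,p)$ with $p=\omega(n^{-1/2}\log^{1/2} n)$, and let $i_t(G^p_n)$ denote the number of independent sets of size $t$ in $G^p_n$. Then with probability tending to $1$ as $n\to\infty$, the sequence $(i_t(G^p_n))_{t=[\varepsilon n]}^{n}$ is unimodal with mode $n/2$, and moreover is log-concave.
   Context: $G(n,n,p)$ is the probability distribution on bipartite graphs with a fixed bipartition $\mathcal{E}\cup\mathcal{O}$, $|\mathcal{E}|=|\mathcal{O}|=n$, in which each of the $n^2$ pairs in $\mathcal{E}\times\mathcal{O}$ is an edge independently with probability $p=p(n)$. $p=\omega(f(n))$ means $p/f(n)\to\infty$. A sequence $(a_t)_{t=m}^{n}$ is unimodal with mode $k$ if $a_m\le\dots\le a_k\ge\dots\ge a_n$; it is log-concave if $a_k^2\ge a_{k-1}a_{k+1}$ for all $m<k<n$. $[y]$ denotes the integer part of $y$. *)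

(* Defs.v *)
From HB Require Import structures.
From mathcomp Require Import all_boot all_order all_algebra.
From mathcomp Require Import all_classical all_reals all_analysis.
Set Implicit Arguments. Unset Strict Implicit. Unset Printing Implicit Defensive.
Import Order.TTheory GRing.Theory Num.Theory.
Local Open Scope ring_scope.

(* A bipartite graph on E = 'I_n (even side) and O = 'I_n (odd side):
   g (i, j) = true iff {E_i, O_j} is an edge. *)
Definition bigraph (n : nat) := {ffun 'I_n * 'I_n -> bool}.

Definition gnnp_weight (R : realType) (n : nat) (p : R) (g : bigraph n) : R :=
  \prod_(e : 'I_n * 'I_n) (if g e then p else 1 - p).

Definition gnnp_prob (R : realType) (n : nat) (p : R) (P : pred (bigraph n)) : R :=
  \sum_(g : bigraph n | P g) gnnp_weight p g.

(* A vertex set is a pair (A, B), A subset of E, B subset of O; it is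
   independent iff no edge joins a vertex of A to a vertex of B. *)
Definition indep_set (n : nat) (g : bigraph n) (S : {set 'I_n} * {set 'I_n}) : bool :=
  [forall i in S.1, forall j in S.2, ~~ g (i, j)].

Definition num_indep (n : nat) (g : bigraph n) (t : nat) : nat :=
  #|[set S : {set 'I_n} * {set 'I_n} | indep_set g S && (#|S.1| + #|S.2| == t)%N]|.

Definition unimodal_mode (a : nat -> nat) (m N k : nat) : Prop :=
  (forall t, (m <= t)%N -> (t < k)%N -> (a t <= a t.+1)%N) /\
  (forall t, (m <= t)%N -> (k <= t)%N -> (t < N)%N -> (a t.+1 <= a t)%N).

Definition log_concave (a : nat -> nat) (m N : nat) : Prop :=
  forall k, (m < k)%N -> (k < N)%N -> (a k.-1 * a k.+1 <= a k ^ 2)%N.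

(* Main.v *)
Require Import Defs.
From HB Require Import structures.
From mathcomp Require Import all_boot all_order all_algebra.
From mathcomp Require Import all_classical all_reals all_analysis.
From mathcomp Require Import zify ring lra.
Import Order.TTheory GRing.Theory Num.Theory.
Set Implicit Arguments. Unset Strict Implicit. Unset Printing Implicit Defensive.

Local Open Scope nat_scope.
Lemma step_up (n t C0 C1 X0 X1 : nat) :
  t.+1 * C1 = (n - t) * C0 -> n * X0 <= C0 -> t.+2 <= n - t ->
  2 * C0 + X0 <= 2 * C1 + X1.
Proof.
move=> h1 h2 h3.
have ht : t.+1 <= n by lia.
suff : t.+1 * (2 * C0 + X0) <= t.+1 * (2 * C1).
  rewrite leq_pmul2l //; lia.
have : t.+1 * X0 <= C0 by apply: leq_trans h2; exact: leq_mul.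
nia.
Qed.

Lemma step_down (n t C0 C1 X0 X1 : nat) :
  t.+1 * C1 = (n - t) * C0 -> n * X1 <= C1 -> n <= t + t -> t < n ->
  2 * C1 + X1 <= 2 * C0 + X0.
Proof.
move=> h1 h2 h3 h4.
suff : (n - t) * (2 * C1 + X1) <= (n - t) * (2 * C0).
  rewrite leq_pmul2l; lia.
have : (n - t) * X1 <= C1 by apply: leq_trans h2; apply: leq_mul => //; lia.
nia.
Qed.

Lemma e3l (n k u : nat) : k + u = n -> (2*n+1)^2 * (k * u) <= 4 * n ^ 2 * (u.+1 * k.+1).
Proof.
move=> hku.
have h4 : 4 * (k * u) <= n ^ 2.
  rewrite -hku.
  have : 0 <= (k - u)*(k-u) by [].
  case: (leqP u k) => h.
  - have -> : k = u + (k - u) by lia.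
    set d := k - u. nia.
  - have -> : u = k + (u - k) by lia.
    set d := u - k. nia.
have e : (2*n+1)^2 * (k * u) = (4 * n + 1) * (k * u) + 4 * n ^ 2 * (k * u) by ring.
have e' : 4 * n ^ 2 * (u.+1 * k.+1) = 4 * n ^ 2 * (k * u) + 4 * n ^ 2 * (n + 1).
  rewrite -hku; ring.
rewrite e e' [X in _ <= X]addnC leq_add2r.
have : (4 * n + 1) * (4 * (k * u)) <= (4 * n + 1) * n ^ 2 by rewrite leq_mul2l h4 orbT.
nia.
Qed.

Lemma lc_step (n k Cm C0 Cp Xm X0 Xp : nat) :
  0 < k -> k < n ->
  k * C0 = (n - k.-1) * Cm -> k.+1 * Cp = (n - k) * C0 ->
  n * Xm <= Cm -> n * Xp <= Cp ->
  (2 * Cm + Xm) * (2 * Cp + Xp) <= (2 * C0 + X0) ^ 2.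
Proof.
move=> k0 kn h1 h2 hm hp.
have n0 : 0 < n by lia.
set u := n - k.
have hu : n - k.-1 = u.+1 by rewrite /u; lia.
rewrite hu in h1.
have e1 : n ^ 2 * ((2 * Cm + Xm) * (2 * Cp + Xp)) <= (2*n+1) ^ 2 * (Cm * Cp).
  have -> : n ^ 2 * ((2 * Cm + Xm) * (2 * Cp + Xp)) =
            (2 * n * Cm + n * Xm) * (2 * n * Cp + n * Xp) by ring.
  have -> : (2*n+1) ^ 2 * (Cm * Cp) = ((2 * n + 1) * Cm) * ((2 * n + 1) * Cp) by ring.
  apply: leq_mul; lia.
have e2 : u.+1 * k.+1 * ((2*n+1) ^ 2 * (Cm * Cp)) = (2*n+1)^2 * (k * u) * (C0 * C0).
  have -> : u.+1 * k.+1 * ((2*n+1) ^ 2 * (Cm * Cp)) = (2*n+1)^2 * ((u.+1 * Cm) * (k.+1 * Cp)) by ring.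
  rewrite -h1 h2 -/u; ring.
have e3 : (2*n+1)^2 * (k * u) <= 4 * n ^ 2 * (u.+1 * k.+1).
  by apply: e3l; rewrite /u; lia.
suff : u.+1 * k.+1 * (n ^ 2 * ((2 * Cm + Xm) * (2 * Cp + Xp))) <=
       u.+1 * k.+1 * (n ^ 2 * (2 * C0 + X0) ^ 2).
  rewrite leq_pmul2l ?muln_gt0 // leq_pmul2l ?expn_gt0 ?n0 //.
apply: leq_trans (leq_mul (leqnn (u.+1 * k.+1)) e1) _.
rewrite e2.
apply: leq_trans (leq_mul e3 (leqnn (C0 * C0))) _.
have -> : 4 * n ^ 2 * (u.+1 * k.+1) * (C0 * C0) = u.+1 * k.+1 * (n ^ 2 * (4 * (C0 * C0))) by ring.
rewrite leq_mul2l leq_mul2l; apply/orP; right; apply/orP; right.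
have -> : (2 * C0 + X0) ^ 2 = 4 * (C0 * C0) + (4 * C0 + X0) * X0 by ring.
exact: leq_addr.
Qed.
Definition Xn (n : nat) (g : bigraph n) (t : nat) : nat :=
  \sum_(A : {set 'I_n}) \sum_(B : {set 'I_n})
     ((A != finset.set0) && (B != finset.set0) && (#|A| + #|B| == t) && indep_set g (A, B)).

Lemma count_size (n t : nat) : \sum_(B : {set 'I_n}) (#|B| == t) = 'C(n, t).
Proof.
have := card_draws ('I_n) t; rewrite card_ord => <-.
rewrite -sum1_card big_mkcond /=.
rewrite [RHS]big_mkcond /=; by apply: eq_bigr => B _; rewrite inE; case: (_ == _).
Qed.

Lemma num_indep_sum (n : nat) (g : bigraph n) t :
  num_indep g t = \sum_(A : {set 'I_n}) \sum_(B : {set 'I_n})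
     (indep_set g (A, B) && (#|A| + #|B| == t)).
Proof.
rewrite /num_indep -sum1_card big_mkcond /=.
rewrite (pair_big xpredT xpredT (fun A B => nat_of_bool (indep_set g (A, B) && (#|A| + #|B| == t)))) /=.
by apply: eq_bigr => -[A B] _; rewrite inE; case: (_ && _).
Qed.

Lemma indep0l n (g : bigraph n) B : indep_set g (finset.set0, B).
Proof. by apply/forall_inP => i; rewrite inE. Qed.

Lemma indep0r n (g : bigraph n) A : indep_set g (A, finset.set0).
Proof. by apply/forall_inP => i _; apply/forall_inP => j; rewrite inE. Qed.

Lemma num_indep_decomp (n : nat) (g : bigraph n) t : 0 < t ->
  num_indep g t = 2 * 'C(n, t) + Xn g t.
Proof.
move=> t0; rewrite num_indep_sum /Xn.
have E : forall A B : {set 'I_n}, 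
  nat_of_bool (indep_set g (A, B) && (#|A| + #|B| == t)) =
  ((A == finset.set0) * (#|B| == t) + (B == finset.set0) * (#|A| == t)) + 
  ((A != finset.set0) && (B != finset.set0) && (#|A| + #|B| == t) && indep_set g (A, B)).
  move=> A B.
  have t0' : (0 == t) = false by case: (t) t0.
  have [->|nA] := eqVneq A finset.set0.
    rewrite indep0l cards0 add0n /= t0' muln0 mul1n !addn0 //.
  have [->|nB2] := eqVneq B finset.set0.
    rewrite indep0r cards0 addn0 /= t0'. by rewrite mul0n mul1n addn0 add0n.
  rewrite /= ?(negbTE nA) ?(negbTE nB2) /= ?mul0n ?add0n. by rewrite andbC.
rewrite (eq_bigr _ (fun A _ => eq_bigr _ (fun B _ => E A B))).
under eq_bigr => A _ do rewrite big_split /=.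
rewrite big_split /=; congr (_ + _).
under eq_bigr => A _ do rewrite big_split /=.
rewrite big_split /= mul2n -addnn; congr (_ + _).
- rewrite (bigD1 finset.set0) //= [X in _ + X]big1 ?addn0; last first.
    by move=> A /negPf nA; apply: big1 => B _; rewrite nA.
  by rewrite -count_size; apply: eq_bigr => B _; rewrite eqxx mul1n.
- rewrite exchange_big (bigD1 finset.set0) //= [X in _ + X]big1 ?addn0; last first.
    by move=> B /negPf nB; apply: big1 => A _; rewrite nB.
  by rewrite -count_size; apply: eq_bigr => B _; rewrite eqxx mul1n.
Qed.

Local Open Scope ring_scope.
Section Prob.
Variables (R : realType) (n : nat) (p : R).

Lemma weight_ge0 (hp : 0 <= p <= 1) (g : bigraph n) : 0 <= gnnp_weight p g.
Proof.
case/andP: hp => h0 h1.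
apply: prodr_ge0 => e _; case: (g e) => //; by rewrite subr_ge0.
Qed.

Lemma weight_sum1 : \sum_(g : bigraph n) gnnp_weight p g = 1.
Proof.
rewrite /gnnp_weight.
rewrite -(bigA_distr_bigA (fun (e : 'I_n * 'I_n) (b : bool) => if b then p else 1 - p)) /=.
by apply: big1 => e _; rewrite big_bool /= addrC subrK.
Qed.

Lemma prob_indep (A B : {set 'I_n}) :
  \sum_(g : bigraph n) gnnp_weight p g * (indep_set g (A, B))%:R
  = (1 - p) ^+ (#|A| * #|B|).
Proof.
have ind : forall g : bigraph n, (indep_set g (A, B))%:R =
   \prod_(e : 'I_n * 'I_n) (if (e.1 \in A) && (e.2 \in B) then (~~ g e)%:R else 1 : R).
  move=> g; case: (boolP (indep_set g (A, B))) => H.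
    rewrite big1 // => -[i j] _ /=; case: ifP => // /andP [h1 h2].
    by move/forall_inP: H => /(_ _ h1) /forall_inP /(_ _ h2) /= ->.
  move/forall_inPn: H => [i iA /forall_inPn [j jB /negPn gij]].
  by rewrite (bigD1 (i, j)) //= iA jB gij /= mul0r.
under eq_bigr => g _ do rewrite ind /gnnp_weight -big_split /=.
rewrite -(bigA_distr_bigA (fun (e : 'I_n * 'I_n) (b : bool) =>
   (if b then p else 1 - p) * (if (e.1 \in A) && (e.2 \in B) then (~~ b)%:R else 1 : R))) /=.
under eq_bigr => e _ do rewrite big_bool /=.
rewrite (eq_bigr (fun e : 'I_n * 'I_n => if (e.1 \in A) && (e.2 \in B) then 1 - p else 1)); last first.
  by move=> e _; case: ifP => _; rewrite /= ?mulr0 ?mulr1 ?add0r // addrC subrK.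
rewrite -big_mkcond prodr_const; congr (_ ^+ _).
rewrite -cardsX; apply: eq_card => -[i j]; by rewrite finset.in_setX.
Qed.

End Prob.
Lemma bin_le_pow (n a : nat) : ('C(n, a) <= n ^ a)%N.
Proof.
elim: a => [|a IH]; first by rewrite bin0.
have h := mul_bin_left n a.
have h2 : ((n - a) * 'C(n, a) <= n * n ^ a)%N by apply: leq_mul => //; apply: leq_subr.
rewrite expnS; apply: leq_trans h2; rewrite -h; exact: leq_pmull.
Qed.

Lemma bin_shift (n a b : nat) : (b + a <= n)%N -> ('C(n, b) <= n ^ a * 'C(n, b + a))%N.
Proof.
elim: a => [|a IH] h; first by rewrite addn0 expn0 mul1n.
have h1 : ('C(n, b + a) <= n * 'C(n, (b + a).+1))%N.
  have := mul_bin_left n (b + a).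
  move=> e.
  have : (1 <= n - (b + a))%N by lia.
  move=> h3.
  apply: leq_trans (_ : (n - (b + a)) * 'C(n, b + a) <= _)%N.
    by rewrite leq_pmull.
  by rewrite -e leq_mul2r; apply/orP; right; lia.
apply: leq_trans (IH _) _; first lia.
rewrite expnS addnS -mulnA mulnCA leq_mul2l h1 orbT //.
Qed.

Lemma bin_prod (n a b : nat) : (a + b <= n)%N ->
  ('C(n, a) * 'C(n, b) <= n ^ (2 * a) * 'C(n, a + b))%N.
Proof.
move=> h.
rewrite mul2n -addnn expnD -mulnA.
apply: leq_mul; first exact: bin_le_pow.
rewrite (addnC a b); apply: bin_shift; lia.
Qed.

Section Prob2.
Variables (R : realType) (n : nat).

Lemma sum_card (F : nat -> R) :
  \sum_(A : {set 'I_n}) F #|A| = \sum_(a < n.+1) ('C(n, a))%:R * F a.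
Proof.
rewrite (partition_big (fun A : {set 'I_n} => (inord #|A| : 'I_n.+1)) xpredT) //=.
apply: eq_bigr => a _.
have E : forall A : {set 'I_n}, (inord #|A| == a :> 'I_n.+1) = (#|A| == a).
  move=> A; rewrite -val_eqE /= inordK //.
  by apply: leq_trans (max_card _) _; rewrite card_ord.
rewrite (eq_bigr (fun _ => F a)); last by move=> A /=; rewrite ?andTb E => /eqP ->.
rewrite sumr_const [RHS]mulr_natl; congr (_ *+ _).
have := card_draws ('I_n) a; rewrite card_ord => <-; apply: eq_card => A; by rewrite !inE -E.
Qed.

End Prob2.

Section E.
Variables (R : realType) (n : nat).

Lemma EX (p : R) t : \sum_(g : bigraph n) gnnp_weight p g * (Xn g t)%:R =
  \sum_(A : {set 'I_n}) \sum_(B : {set 'I_n})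
    ((A != finset.set0) && (B != finset.set0) && (#|A| + #|B| == t))%:R * (1 - p) ^+ (#|A| * #|B|).
Proof.
rewrite /Xn.
under eq_bigr => g _ do rewrite natr_sum mulr_sumr.
rewrite exchange_big; apply: eq_bigr => A _.
under eq_bigr => g _ do rewrite natr_sum mulr_sumr.
rewrite exchange_big; apply: eq_bigr => B _.
case: (_ && _ && _) => /=.
  by rewrite mul1r; apply: prob_indep.
by rewrite mul0r; apply: big1 => g _; rewrite mulr0.
Qed.

Lemma term_le (q : R) (a b t L : nat) : 0 <= q <= 1 ->
  (n%:R ^+ 2 * q ^+ L <= 1) ->
  (0 < a)%N -> (a <= b)%N -> (a + b = t)%N -> (L.*2 <= t)%N -> (t <= n)%N ->
  ('C(n, a))%:R * (('C(n, b))%:R * q ^+ (a * b)) <= ('C(n, t))%:R * (n%:R ^+ 2 * q ^+ L).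
Proof.
move=> /andP [q0 q1] r1 a0 ab e Lt tn.
have hb : (L <= b)%N by lia.
have r0 : 0 <= n%:R ^+ 2 * q ^+ L :> R by rewrite mulr_ge0 ?exprn_ge0.
rewrite mulrA -natrM.
apply: le_trans (_ : ((n ^ (2 * a) * 'C(n, t))%:R * q ^+ (a * L)) <= _).
  apply: ler_pM => //; first by rewrite exprn_ge0.
    by rewrite ler_nat -e; apply: bin_prod; lia.
  by apply: ler_wiXn2l => //; rewrite leq_mul2l hb orbT.
have -> : ((n ^ (2 * a) * 'C(n, t))%:R * q ^+ (a * L)) =
   ('C(n, t))%:R * ((n%:R ^+ 2 * q ^+ L) ^+ a) :> R.
  by rewrite natrM natrX exprMn -!exprM (mulnC L a); ring.
apply: ler_wpM2l => //.
exact: ler_iXnr.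
Qed.

Lemma term_bound (q : R) (a b t L : nat) : 0 <= q <= 1 ->
  (n%:R ^+ 2 * q ^+ L <= 1) -> (L.*2 <= t)%N -> (t <= n)%N ->
  ('C(n, a))%:R * (('C(n, b))%:R * (((a != 0%N) && (b != 0%N) && (a + b == t))%:R * q ^+ (a * b)))
   <= ('C(n, t))%:R * (n%:R ^+ 2 * q ^+ L).
Proof.
move=> hq r1 Lt tn.
have r0 : 0 <= ('C(n, t))%:R * (n%:R ^+ 2 * q ^+ L) :> R.
  case/andP: hq => q0 _; by rewrite !mulr_ge0 ?exprn_ge0.
case: (boolP ((a != 0%N) && (b != 0%N) && (a + b == t))) => [/andP[/andP[a0 b0] /eqP e]|_];
  last by rewrite /= mul0r !mulr0.
rewrite /= mul1r.
case: (leqP a b) => hab.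
  by apply: term_le => //; lia.
rewrite mulrCA mulnC.
by apply: term_le => //; lia.
Qed.

End E.

Section B.
Variables (R : realType) (n : nat).

Lemma Ebound (p : R) (t L : nat) : 0 <= p <= 1 ->
  (n%:R ^+ 2 * (1 - p) ^+ L <= 1) -> (L.*2 <= t)%N -> (t <= n)%N ->
  \sum_(A : {set 'I_n}) \sum_(B : {set 'I_n})
    ((A != finset.set0) && (B != finset.set0) && (#|A| + #|B| == t))%:R * (1 - p) ^+ (#|A| * #|B|)
  <= (n.+1)%:R ^+ 2 * (('C(n, t))%:R * (n%:R ^+ 2 * (1 - p) ^+ L)).
Proof.
move=> /andP [p0 p1] r1 Lt tn.
have hq : 0 <= 1 - p <= 1 by rewrite subr_ge0 p1 /= lerBlDr lerDl.
set G := fun a b : nat => (((a != 0%N) && (b != 0%N) && (a + b == t))%:R * (1 - p) ^+ (a * b) : R).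
have -> : \sum_(A : {set 'I_n}) \sum_(B : {set 'I_n})
    ((A != finset.set0) && (B != finset.set0) && (#|A| + #|B| == t))%:R * (1 - p) ^+ (#|A| * #|B|)
   = \sum_(A : {set 'I_n}) \sum_(B : {set 'I_n}) G #|A| #|B|.
  by apply: eq_bigr => A _; apply: eq_bigr => B _; rewrite /G -!cards_eq0.
under eq_bigr => A _ do rewrite (@sum_card R n (G #|A|)).
rewrite (@sum_card R n (fun a => \sum_(b < n.+1) ('C(n, b))%:R * G a b)).
set K := ('C(n, t))%:R * (n%:R ^+ 2 * (1 - p) ^+ L).
apply: le_trans (_ : \sum_(a < n.+1) \sum_(b < n.+1) K <= _).
  apply: ler_sum => a _; rewrite mulr_sumr; apply: ler_sum => b _.
  exact: term_bound.
by rewrite !sumr_const card_ord expr2 -mulrA !mulr_natl.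
Qed.

End B.

Definition Good (n m : nat) (g : bigraph n) : bool :=
  [forall t : 'I_n.+1, (m <= t)%N ==> (n * Xn g t <= 'C(n, t))%N].

Section C.
Variables (R : realType) (n : nat).

Lemma sum_sub_le (P : pred (bigraph n)) (F : bigraph n -> R) :
  (forall g, 0 <= F g) -> \sum_(g | P g) F g <= \sum_g F g.
Proof.
move=> F0; rewrite big_mkcond /=; apply: ler_sum => g _.
by case: (P g).
Qed.

Lemma bad_bound (p : R) (m L : nat) : 0 <= p <= 1 ->
  (n%:R ^+ 2 * (1 - p) ^+ L <= 1) -> (L.*2 <= m)%N ->
  \sum_(g : bigraph n | ~~ Good m g) gnnp_weight p g
    <= (n.+1)%:R ^+ 4 * (n%:R ^+ 2 * (1 - p) ^+ L).
Proof.
move=> hp r1 Lm.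
have hp' := hp; case/andP: hp' => p0 p1.
set r := n%:R ^+ 2 * (1 - p) ^+ L.
have r0 : 0 <= r by rewrite /r mulr_ge0 ?exprn_ge0 // subr_ge0.
pose Z (g : bigraph n) : R :=
  \sum_(t < n.+1 | (m <= t)%N) n%:R * (Xn g t)%:R / ('C(n, t))%:R.
have Z0 : forall g, 0 <= Z g.
  by move=> g; apply: sumr_ge0 => t _; rewrite divr_ge0 ?mulr_ge0.
have Z1 : forall g, ~~ Good m g -> 1 <= Z g.
  move=> g /forallPn [t]; rewrite negb_imply => /andP [mt H].
  rewrite /Z (bigD1 t) //=.
  apply: le_trans (_ : n%:R * (Xn g t)%:R / ('C(n, t))%:R + 0 <= _); last first.
    by rewrite lerD2l; apply: sumr_ge0 => i _; rewrite divr_ge0 ?mulr_ge0.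
  have C0 : 0 < ('C(n, t))%:R :> R by rewrite ltr0n bin_gt0 -ltnS ltn_ord.
  rewrite addr0 ler_pdivlMr // mul1r -natrM ler_nat.
  by rewrite -ltnNge in H; apply: ltnW.
apply: le_trans (_ : \sum_(g : bigraph n) gnnp_weight p g * Z g <= _).
  apply: le_trans (_ : \sum_(g : bigraph n | ~~ Good m g) gnnp_weight p g * Z g <= _).
    apply: ler_sum => g hg.
    by rewrite -[X in X <= _]mulr1; apply: ler_wpM2l; [exact: weight_ge0|exact: Z1].
  by apply: sum_sub_le => g; rewrite mulr_ge0 // weight_ge0.
have -> : \sum_(g : bigraph n) gnnp_weight p g * Z g =
   \sum_(t < n.+1 | (m <= t)%N) n%:R / ('C(n, t))%:R *
       \sum_(g : bigraph n) gnnp_weight p g * (Xn g t)%:R.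
  rewrite /Z; under eq_bigr => g _ do rewrite mulr_sumr.
  rewrite exchange_big; apply: eq_bigr => t _; rewrite mulr_sumr.
  by apply: eq_bigr => g _; ring.
apply: le_trans (_ : \sum_(t < n.+1 | (m <= t)%N) n%:R * (n.+1%:R ^+ 2 * r) <= _).
  apply: ler_sum => t mt.
  have C0 : 0 < ('C(n, t))%:R :> R by rewrite ltr0n bin_gt0 -ltnS ltn_ord.
  rewrite EX.
  apply: le_trans (_ : n%:R / ('C(n, t))%:R * ((n.+1)%:R ^+ 2 * (('C(n, t))%:R * r)) <= _).
    apply: ler_wpM2l; first by rewrite divr_ge0.
    apply: Ebound => //; first by apply: leq_trans Lm mt.
    by rewrite -ltnS ltn_ord.
  rewrite le_eqVlt; apply/orP; left; apply/eqP.
  by field; rewrite lt0r_neq0.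
apply: le_trans (_ : \sum_(t < n.+1) n%:R * (n.+1%:R ^+ 2 * r) <= _).
  rewrite big_mkcond /=; apply: ler_sum => t _. case: ifP => // _; apply: mulr_ge0 => //; apply: mulr_ge0 => //; exact: exprn_ge0.
rewrite sumr_const card_ord -[X in X <= _]mulr_natr.
have -> : (n.+1)%:R ^+ 4 * r = ((n.+1)%:R * ((n.+1)%:R ^+ 2 * r)) * (n.+1)%:R :> R by ring.
apply: ler_wpM2r => //; apply: ler_wpM2r; first by rewrite mulr_ge0 ?exprn_ge0.
by rewrite ler_nat.
Qed.

End C.

Local Open Scope nat_scope.
Lemma bin_mid (n t : nat) : n = t.*2.+1 -> 'C(n, t.+1) = 'C(n, t).
Proof.
move=> e; rewrite -bin_sub; last by lia.
by congr 'C(_, _); lia.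
Qed.

Lemma good_shape (n m : nat) (g : bigraph n) : 0 < m -> Good m g ->
  (unimodal_mode (num_indep g) m n n./2 \/ unimodal_mode (num_indep g) m n (uphalf n)) /\
  log_concave (num_indep g) m n.
Proof.
move=> m0 /forallP hG0.
have hG : forall t, m <= t -> t <= n -> n * Xn g t <= 'C(n, t).
  move=> t mt tn; have tn' : t < n.+1 by [].
  by have := hG0 (Ordinal tn'); rewrite /= mt.
have hA : forall t, 0 < t -> num_indep g t = 2 * 'C(n, t) + Xn g t.
  by move=> t t0; apply: num_indep_decomp.
have up : forall t, m <= t -> t.*2.+2 <= n -> num_indep g t <= num_indep g t.+1.
  move=> t mt tn; rewrite !hA //; last by lia.
  apply: step_up (mul_bin_left n t) (hG _ mt _) _; lia.
have down : forall t, m <= t -> n <= t.*2 -> t < n -> num_indep g t.+1 <= num_indep g t.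
  move=> t mt tn tn2; rewrite !hA //; last by lia.
  apply: step_down (mul_bin_left n t) (hG _ _ _) _ _; lia.
have mid : forall t, m <= t -> n = t.*2.+1 ->
    num_indep g t.+1 - Xn g t.+1 = num_indep g t - Xn g t.
  move=> t mt e; rewrite !hA //; last by lia.
  by rewrite (bin_mid e) !addnK.
split.
  set h := n./2.
  have [le_h|lt_h] := leqP (Xn g h) (Xn g h.+1).
    right; split.
      move=> t mt tu.
      have [e|ne] := eqVneq n (t.*2.+1).
        have := mid t mt e; rewrite !hA //; try lia.
        move=> _; rewrite (bin_mid e) leq_add2l.
        suff -> : t = h by [].
        by rewrite /h e; lia.
      apply: up => //; rewrite uphalf_half in tu; lia.
    move=> t mt tu tn; apply: down => //; rewrite uphalf_half in tu; lia.
  left; split.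
    move=> t mt th; apply: up => //; lia.
  move=> t mt th tn.
  have [e|ne] := eqVneq n (t.*2.+1).
    rewrite !hA //; try lia.
    rewrite (bin_mid e) leq_add2l.
    suff -> : t = h by apply: ltnW.
    by rewrite /h e; lia.
  apply: down => //; lia.
move=> k mk kn.
have k0 : 0 < k by lia.
have k1 : 0 < k.-1 by lia.
rewrite !hA //; try lia.
apply: (@lc_step n k) => //.
- by rewrite -(mul_bin_left n k.-1) prednK.
- exact: mul_bin_left.
- apply: hG; lia.
- apply: hG; lia.
Qed.

Local Open Scope ring_scope.

Lemma half_le2 (k : nat) : (k./2.*2 <= k)%N.
Proof. lia. Qed.

Lemma half_le (k : nat) : (k <= k./2.*2 + 1)%N.
Proof. lia. Qed.

Lemma sqrt_ge_id (R : realType) (x : R) : 0 <= x -> x <= 1 -> x <= Num.sqrt x.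
Proof.
move=> x0 x1.
have s0 : 0 <= Num.sqrt x := sqrtr_ge0 x.
have s1 : Num.sqrt x <= 1 by rewrite -(sqrtr1 R); apply: ler_wsqrtr.
have e : x = Num.sqrt x ^+ 2 by rewrite sqr_sqrtr.
rewrite [X in X <= _]e expr2; rewrite -[X in _ <= X]mulr1.
by apply: ler_wpM2l.
Qed.

Lemma est (R : realType) (eps M p : R) (n : nat) :
  0 < eps -> M * eps = 20 -> (1 <= n)%N -> 0 <= p <= 1 ->
  M * Num.sqrt (ln (n%:R : R) / n%:R) <= p ->
  (1 - p) ^+ (Num.truncn (eps * n%:R))./2 * n%:R ^+ 10 <= expR 1.
Proof.
move=> e0 Me n1 /andP [p0 p1] hp.
set m := Num.truncn (eps * n%:R).
set L := m./2.
set nn := (n%:R : R).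
have nn1 : 1 <= nn by rewrite /nn ler1n.
have nn0 : 0 < nn by apply: lt_le_trans nn1.
have lnn0 : 0 <= ln nn := ln_ge0 nn1.
have lnn : ln nn <= nn.
  have e1 : 1 + (nn - 1) = nn by ring.
  have := @le_ln1Dx R (nn - 1); rewrite e1 => h.
  have : ln nn <= nn - 1 by apply: h; lra.
  lra.
have M0 : 0 < M.
  have : 0 < M * eps by rewrite Me.
  by rewrite pmulr_lgt0.
have x0 : 0 <= ln nn / nn by rewrite divr_ge0 // ltW.
have x1 : ln nn / nn <= 1 by rewrite ler_pdivrMr // mul1r.
have pge : M * (ln nn / nn) <= p.
  apply: le_trans hp; apply: ler_wpM2l; [exact: ltW | exact: sqrt_ge_id].
have pn : M * ln nn <= p * nn.
  by rewrite -ler_pdivrMr // -mulrA.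
have mge : eps * nn - 1 <= m%:R.
  have := truncnS_gt (eps * nn); rewrite -/m -natr1; lra.
have Lge : m%:R <= 2 * L%:R + 1 :> R.
  have h : (m%:R : R) <= (L.*2 + 1)%:R by rewrite ler_nat; exact: half_le.
  have e : ((L.*2 + 1)%:R : R) = 2 * L%:R + 1 by rewrite natrD -muln2 natrM mulrC.
  by rewrite -e.
have pL : 10 * ln nn - 1 <= p * L%:R.
  have h1 : p * (eps * nn - 2) <= p * (2 * L%:R) by apply: ler_wpM2l => //; lra.
  have h2 : eps * (M * ln nn) <= eps * (p * nn) by apply: ler_wpM2l => //; exact: ltW.
  have h3 : eps * (M * ln nn) = 20 * ln nn by rewrite mulrA (mulrC eps) Me.
  have h4 : p * (eps * nn - 2) = eps * (p * nn) - 2 * p by ring.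
  have h5 : p * (2 * L%:R) = 2 * (p * L%:R) by ring.
  lra.
have q0 : 0 <= 1 - p by lra.
have qe : 1 - p <= expR (- p) by have := expR_ge1Dx (- p); lra.
have qL : (1 - p) ^+ L <= expR (- p) ^+ L.
  by apply: lerXn2r; rewrite ?nnegrE // ltW ?expR_gt0.
have eL : expR (- p) ^+ L = expR (L%:R * (- p)) by rewrite expRM_natl.
have en : nn ^+ 10 = expR (10%:R * ln nn) by rewrite expRM_natl lnK // posrE.
apply: le_trans (_ : expR (L%:R * (- p)) * nn ^+ 10 <= _).
  by rewrite -eL; apply: ler_wpM2r => //; rewrite exprn_ge0 // ltW.
rewrite en -expRD ler_expR.
lra.
Qed.

Unset Implicit Arguments.
Local Open Scope ring_scope.
Theorem mainTheorem2 (R : realType) (eps : R) (p : nat -> R) :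
  0 < eps ->
  (forall n, 0 <= p n <= 1) ->
  (forall M : R, 0 < M -> exists N : nat, forall n : nat, (N <= n)%N ->
      M * Num.sqrt (ln n%:R / n%:R) <= p n) ->
  forall delta : R, 0 < delta -> exists N : nat, forall n : nat, (N <= n)%N ->
    1 - delta <=
    gnnp_prob (p n) (fun g : bigraph n =>
      let m := Num.truncn (eps * n%:R) in
      `[< ((unimodal_mode (num_indep g) m n n./2 \/
            unimodal_mode (num_indep g) m n (uphalf n)) /\
           log_concave (num_indep g) m n) >]).
Proof.
move=> e0 hp0 hM delta d0.
set M := 20 / eps.
have Me : M * eps = 20 by rewrite /M divfK // lt0r_neq0.
have M0 : 0 < M by rewrite /M divr_gt0.
have [N0 HN0] := hM M M0.
set c := expR 1 : R.
have c0 : 0 < c by rewrite /c expR_gt0.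
exists (maxn (maxn N0 1) (maxn (Num.truncn (1 / eps)).+1 (Num.truncn (16 * c / delta + c)).+1)).
move=> n; rewrite !geq_max => /andP [/andP [n0 n1] /andP [n2 n3]].
set nn := (n%:R : R).
have nn1 : 1 <= nn by rewrite /nn ler1n.
have nn0 : 0 < nn by apply: lt_le_trans nn1.
have hn2 : 1 / eps < nn.
  by rewrite -(truncn_lt_nat _ (divr_ge0 ler01 (ltW e0))).
have hn3 : 16 * c / delta + c < nn.
  rewrite -(truncn_lt_nat _ _) //.
  by rewrite addr_ge0 ?divr_ge0 ?mulr_ge0 // ltW.
set m := Num.truncn (eps * nn).
set L := m./2.
have m0 : (0 < m)%N.
  rewrite /m truncn_gt0.
  by move: hn2; rewrite ltr_pdivrMr // mulrC => /ltW.
have hp := hp0 n.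
have E := est e0 Me n1 hp (HN0 n n0).
rewrite -/nn -/m -/L -/c in E.
set y := (1 - p n) ^+ L in E.
have y0 : 0 <= y by rewrite /y exprn_ge0 // subr_ge0; case/andP: hp.
set r := nn ^+ 2 * y.
have {}E : (1 - p n) ^+ L * nn ^+ 10 <= c := E.
have r0 : 0 <= r by apply: mulr_ge0 => //; apply: exprn_ge0; exact: ltW.
have n4 : nn <= nn ^+ 4 by apply: ler_eXnr.
have n8 : nn <= nn ^+ 8 by apply: ler_eXnr.
have cn : c < nn.
  have : 0 <= 16 * c / delta by rewrite divr_ge0 ?mulr_ge0 // ltW.
  lra.
have r1 : r <= 1.
  have h : r * nn ^+ 8 <= 1 * nn ^+ 8.
    have -> : r * nn ^+ 8 = y * nn ^+ 10 by rewrite /r; ring.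
    rewrite mul1r; apply: le_trans E _; apply: le_trans n8; exact: ltW.
  by move: h; rewrite ler_pM2r // exprn_gt0.
have rd : (n.+1)%:R ^+ 4 * r <= delta.
  set A := nn ^+ 4 * r.
  have A0 : 0 <= A.
    rewrite /A; apply: mulr_ge0; last exact: r0.
    apply: exprn_ge0; exact: ltW.
  have hA : A * nn <= c.
    apply: le_trans (_ : A * nn ^+ 4 <= _); first by apply: ler_wpM2l.
    have -> : A * nn ^+ 4 = y * nn ^+ 10 by rewrite /A /r; ring.
    exact: E.
  have hd : 16 * c < delta * nn.
    have e : 16 * c / delta * delta = 16 * c by rewrite divfK // lt0r_neq0.
    have h2 : 16 * c / delta < nn by have := c0; lra.
    by rewrite -e mulrC ltr_pM2l.
  have h16 : 16 * A < delta.
    have : 16 * A * nn < delta * nn by lra.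
    by rewrite ltr_pM2r.
  have hn : (n.+1)%:R ^+ 4 <= 16 * nn ^+ 4.
    have -> : (16 : R) = 2 ^+ 4 by rewrite -natrX.
    rewrite -exprMn; apply: lerXn2r; rewrite ?nnegrE ?addr_ge0 //.
      by rewrite mulr_ge0 // ltW.
    rewrite -natr1 -/nn; lra.
  apply: le_trans (_ : 16 * nn ^+ 4 * r <= _); first by apply: ler_wpM2r.
  by rewrite -mulrA -/A ltW.
have hb := @bad_bound R n (p n) m L hp r1 (half_le2 m).
have hs := @weight_sum1 R n (p n).
rewrite (bigID (fun g => Good m g)) /= in hs.
rewrite /gnnp_prob.
apply: le_trans (_ : \sum_(g : bigraph n | Good m g) gnnp_weight (p n) g <= _).
  have e : \sum_(g : bigraph n | Good m g) gnnp_weight (p n) g =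
           1 - \sum_(g : bigraph n | ~~ Good m g) gnnp_weight (p n) g by lra.
  have hb2 : \sum_(g : bigraph n | ~~ Good m g) gnnp_weight (p n) g <= delta := le_trans hb rd.
  rewrite e; lra.
rewrite big_mkcond [X in _ <= X]big_mkcond /=; apply: ler_sum => g _.
case: (boolP (Good m g)) => hg.
  rewrite ifT //; apply/asboolP; exact: good_shape.
by case: ifP => _ //; apply: weight_ge0.
Qed.
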